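(* Let $n\ge 2$, $N=\{1,\dots,n\}$, for each $i\in N$ let $A_i$ be a nonempty finite set, $A=\prod_{i\in N}A_i$, $u_i:A\to\mathbb{R}$, $u(a)=(u_i(a))_{i\in N}$. Let $V=\operatorname{co}\{u(a):a\in A\}$ and $F^*=\prod_{i\in N}\left[\min_{a\in A}u_i(a),\ \max_{a\in A}u_i(a)\right]$. (1) If $V\neq F^*$, then for all $\delta,\delta'\in(0,1]$ and $T,T'\in\mathbb{N}$ with $\delta^T<(\delta')^{T'}$, we have $F(\delta',T')\subsetneq F(\delta,T)$. (2) If $V=F^*$, then $F(\delta,T)=V$ for all $\delta\in(0,1]$ and $T\in\mathbb{N}$.
   Context: $\operatorname{co}$ denotes convex hull. For $\delta\in(0,1]$, $T\in\mathbb{N}$ and $a^{[nT]}=(a^1,\dots,a^{nT})\in A^{nT}$, extend indices by $a^s=a^{s-nT}$ for $s\ge nT+1$, set $U_i(a^{[nT]})=\frac{1}{\sum_{k=1}^{nT}\delta^{k-1}}\sum_{k=1}^{nT}\delta^{k-1}u_i(a^{(i-1)T+k})$, $U=(U_i)_{i\in N}$, and $F(\delta,T)=\operatorname{co}\left(\bigcup_{a^{[nT]}\in A^{nT}}\{U(a^{[nT]})\}\right)$. (The paper writes $F(\Delta)$ for $F(\delta,T)$ with $\Delta=\delta^T$.) *)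

(* Defs.v *)
From HB Require Import structures.
From mathcomp Require Import all_boot all_order all_algebra.
From mathcomp Require Import boolp classical_sets reals.
Set Implicit Arguments. Unset Strict Implicit. Unset Printing Implicit Defensive.
Import Order.TTheory GRing.Theory Num.Theory.
Local Open Scope ring_scope.
Local Open Scope classical_set_scope.

(* Players are 'I_n (player i+1 of the paper is i : 'I_n, 0-based).
   A profile (element of A = prod_i A_i) is a dependent finite function. *)
Definition prof (n : nat) (A : 'I_n -> finType) := {dffun forall i : 'I_n, A i}.

Definition co (R : realType) (n : nat) (S : set ('I_n -> R)) : set ('I_n -> R) :=
  [set x | exists (m : nat) (w : 'I_m -> R) (p : 'I_m -> ('I_n -> R)),
     (forall k, 0 <= w k) /\ \sum_(k < m) w k = 1 /\ (forall k, S (p k)) /\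
     x = (fun i => \sum_(k < m) w k * p k i)].

Lemma ord_pos m (k : 'I_m) : (0 < m)%N.
Proof. by apply: leq_ltn_trans (ltn_ord k). Qed.

(* index s (0-based), taken modulo m: periodic extension a^s = a^{s-m} *)
Definition cyc_idx m (k : 'I_m) (s : nat) : 'I_m := Ordinal (ltn_pmod s (ord_pos k)).

(* U_i(a^{[nT]}), with 0-based i and k:  a^{(i-1)T+k} (1-based) = a_{(i*T + k) mod nT} (0-based) *)
Definition Ui (R : realType) n (A : 'I_n -> finType) (u : 'I_n -> prof A -> R)
  (delta : R) (T : nat) (a : 'I_(n * T) -> prof A) (i : 'I_n) : R :=
  (\sum_(k < n * T) delta ^+ k * u i (a (cyc_idx k (i * T + k)%N)))
  / (\sum_(k < n * T) delta ^+ k).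

Definition F (R : realType) n (A : 'I_n -> finType) (u : 'I_n -> prof A -> R)
  (delta : R) (T : nat) : set ('I_n -> R) :=
  co [set Ui u delta a | a in [set: 'I_(n * T) -> prof A]].

Definition V (R : realType) n (A : 'I_n -> finType) (u : 'I_n -> prof A -> R) :
  set ('I_n -> R) := co [set (fun i => u i a) | a in [set: prof A]].

(* F^* = prod_i [min_a u_i(a), max_a u_i(a)] (A finite, nonempty: min/max attained) *)
Definition Fstar (R : realType) n (A : 'I_n -> finType) (u : 'I_n -> prof A -> R) :
  set ('I_n -> R) :=
  [set x | forall i, (exists a, u i a <= x i) /\ (exists b, x i <= u i b)].

(* Main.v *)
From HB Require Import structures.
From mathcomp Require Import all_boot all_order all_algebra.
From mathcomp Require Import boolp classical_sets reals.
From mathcomp Require Import zify ring lra.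
Require Import Defs.
Import Order.TTheory GRing.Theory Num.Theory.
Local Open Scope ring_scope.
Local Open Scope classical_set_scope.

Lemma mod2 (x n : nat) : (x < n + n)%N -> (x %% n = if (x < n)%N then x else x - n)%N.
Proof.
move=> h; case: ifP => hx; first by rewrite modn_small.
have -> : x = (x - n + n)%N by lia.
by rewrite modnDr modn_small; lia.
Qed.

Lemma modMD (q n T r: nat) : (0 < n)%N -> (r < T)%N ->
  ((q * T + r) %% (n * T) = (q %% n) * T + r)%N.
Proof. move=> hn hr. rewrite {1}(divn_eq q n) mulnDl -mulnA -addnA modnMDl modn_small //.
case: n hn => [|n] // _. have : (q %% n.+1 < n.+1)%N by rewrite ltn_mod.
move: (q %% n.+1)%N => x hx. have hx' : (x <= n)%N by [].
have := leq_mul hx' (leqnn T). rewrite mulSn. lia. Qed.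

Definition dist (n j i : nat) := ((j + n - i) %% n)%N.

Ltac m2 := rewrite mod2; [case: ifP; lia | lia].

Lemma dist_lt n j i : (0 < n)%N -> (dist n j i < n)%N.
Proof. by move=> h; rewrite /dist ltn_mod. Qed.
Lemma dist_id n i : (i <= n)%N -> dist n i i = 0%N.
Proof. move=> h; rewrite /dist. have -> : (i + n - i = n)%N by lia. by rewrite modnn. Qed.
Lemma dist_add n i l : (i < n)%N -> (l < n)%N -> dist n ((i + l) %% n) i = l.
Proof. move=> hi hl. rewrite /dist (@mod2 (i+l) n); last lia. case: ifP=> h; m2. Qed.
Lemma add_dist n i j : (i < n)%N -> (j < n)%N -> ((i + dist n j i) %% n = j)%N.
Proof. move=> hi hj. rewrite /dist (@mod2 (j + n - i) n); last lia. case: ifP=> h; m2. Qed.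
Lemma dist_swap n j s i : (i < n)%N -> (s < n)%N -> (j < n)%N ->
  dist n (dist n j s) i = dist n (dist n j i) s.
Proof.
move=> hi hs hj. rewrite /dist (@mod2 (j + n - s) n); last lia.
rewrite (@mod2 (j + n - i) n); last lia.
case: ifP=> h1; case: ifP => h2; rewrite mod2; try lia; case: ifP => h3; rewrite mod2; try lia; case: ifP; lia.
Qed.
Lemma dist_succ n m s : (m.+1 < n)%N -> (s < n)%N -> s != m.+1 -> dist n m.+1 s = (dist n m s).+1.
Proof. move=> hm hs hne. have hne' : s <> m.+1 by apply/eqP. rewrite /dist. rewrite (@mod2 (m + n - s)); last lia. rewrite mod2; last lia. case: ifP; case: ifP; lia. Qed.
Lemma dist_pred n m : (m.+1 < n)%N -> dist n m m.+1 = n.-1.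
Proof. move=> hm. rewrite /dist mod2; last lia. case: ifP; lia. Qed.
Lemma dist_0l n s : (0 < s)%N -> (s < n)%N -> dist n 0 s = (n - s)%N.
Proof. move=> h1 h2. rewrite /dist mod2; last lia. case: ifP; lia. Qed.
Lemma dist_0r n m : (m < n)%N -> dist n m 0 = m.
Proof. move=> h. rewrite /dist mod2; last lia. case: ifP; lia. Qed.

Lemma sum_perm (R : nmodType) (F : nat -> R) n (f g : nat -> nat) :
  (forall x, (x < n)%N -> (f x < n)%N) -> (forall x, (x < n)%N -> (g x < n)%N) ->
  (forall x, (x < n)%N -> f (g x) = x) -> (forall x, (x < n)%N -> g (f x) = x) ->
  \sum_(j < n) F (f j) = \sum_(j < n) F j.
Proof.
move=> hf hg hfg hgf.
pose h (k : 'I_n) : 'I_n := Ordinal (hf k (ltn_ord k)).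
pose h' (k : 'I_n) : 'I_n := Ordinal (hg k (ltn_ord k)).
have hb : bijective h.
  by exists h' => k; apply: val_inj; rewrite /= ?hfg ?hgf.
by rewrite [RHS](reindex h) //; apply: onW_bij.
Qed.

Lemma sum_dist (R : nmodType) (F : nat -> R) n i : (i < n)%N ->
  \sum_(j < n) F (dist n j i) = \sum_(l < n) F l.
Proof.
move=> hi. apply: (@sum_perm R F n (fun j => dist n j i) (fun l => (i + l) %% n)%N).
- by move=> x _; apply: dist_lt; lia.
- by move=> x _; rewrite ltn_mod; lia.
- by move=> x hx; rewrite dist_add.
- by move=> x hx; rewrite add_dist.
Qed.

Lemma sum_shift (R : nmodType) (F : nat -> R) n s : (s < n)%N ->
  \sum_(k < n) F ((k + s) %% n)%N = \sum_(j < n) F j.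
Proof.
move=> hs. apply: (@sum_perm R F n (fun k => (k + s) %% n)%N (fun j => dist n j s)).
- by move=> x _; rewrite ltn_mod; lia.
- by move=> x _; apply: dist_lt; lia.
- by move=> x hx; rewrite addnC add_dist.
- by move=> x hx; rewrite addnC dist_add.
Qed.

Lemma sum_split (R : nmodType) (G : nat -> R) n T :
  \sum_(q < n * T) G q = \sum_(j < n) \sum_(r < T) G (j * T + r)%N.
Proof.
elim: n => [|n IH]; first by rewrite mul0n !big_ord0.
rewrite big_ord_recr /= -IH mulSn addnC.
rewrite -!(big_mkord xpredT) (big_cat_nat _ (n := n * T)) //=; last lia.
congr (_ + _). rewrite -{1}[(n * T)%N]add0n big_addn. have -> : (n * T + T - n * T = T)%N by lia. rewrite big_mkord.
by apply: eq_bigr => r _; rewrite addnC.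
Qed.
Lemma co_fin (R : realType) n (S : set ('I_n -> R)) (I : finType) (w : I -> R)
  (p : I -> 'I_n -> R) :
  (forall k, 0 <= w k) -> \sum_k w k = 1 -> (forall k, S (p k)) ->
  co S (fun i => \sum_k w k * p k i).
Proof.
move=> w0 w1 pS. exists #|I|, (fun j => w (enum_val j)), (fun j => p (enum_val j)).
split=> //; split; first by rewrite -w1 [RHS](reindex _ (onW_bij _ (enum_val_bij I))).
split=> //. apply: funext => i. by rewrite [LHS](reindex _ (onW_bij _ (enum_val_bij I))).
Qed.

Lemma co_sub (R : realType) n (S : set ('I_n -> R)) x : S x -> co S x.
Proof.
move=> Sx. exists 1%N, (fun _ => 1), (fun _ => x). split=> [k|]; first exact: ler01.
rewrite big_ord1; split=> //; split=> // ; apply: funext => i. by rewrite big_ord1 mul1r.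
Qed.

Lemma co_mono (R : realType) n (S S' : set ('I_n -> R)) : S `<=` S' -> co S `<=` co S'.
Proof.
move=> sub x [m [w [p [w0 [w1 [pS ->]]]]]]. exists m, w, p; split=> //; split=> //; split=> // k.
exact: sub.
Qed.

Lemma co_bound (R : realType) n (S : set ('I_n -> R)) (mu : 'I_n -> R) C x :
  (forall p, S p -> \sum_i mu i * p i <= C) -> co S x -> \sum_i mu i * x i <= C.
Proof.
move=> hb [m [w [p [w0 [w1 [pS ->]]]]]].
have -> : \sum_i mu i * (\sum_k w k * p k i) = \sum_k w k * \sum_i mu i * p k i.
  under eq_bigr do rewrite mulr_sumr.
  rewrite exchange_big /=; apply: eq_bigr => k _; rewrite mulr_sumr.
  by apply: eq_bigr => i _; rewrite mulrCA.
have : \sum_k w k * \sum_i mu i * p k i <= \sum_(k < m) w k * C.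
  by apply: ler_sum => k _; apply: ler_wpM2l => //; apply: hb.
by rewrite -mulr_suml w1 mul1r.
Qed.


Lemma conv_core (R : realType) N (D D' : R) (m : nat) : (m < N.+1)%N ->
  let q := fun s : nat => if s == 0%N then 1 - D * D' ^+ N else D' ^+ s.-1 * (D' - D) in
  \sum_(s < N.+1) q s * D ^+ (dist N.+1 m s) = (1 - D ^+ N.+1) * D' ^+ m.
Proof.
move=> hm q. elim: m hm => [|m IH] hm.
- rewrite big_ord_recl /= dist_id // expr0 mulr1 expr0 mulr1.
  have -> : \sum_(i < N) q (bump 0 i) * D ^+ dist N.+1 0 (bump 0 i)
          = D * \sum_(i < N) (D' - D) * (D ^+ (N.-1 - i) * D' ^+ i).
    rewrite mulr_sumr; apply: eq_bigr => i _.
    rewrite /q /bump /= add1n /= dist_0l //; last by rewrite ltnS.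
    have -> : (N.+1 - i.+1 = (N.-1 - i).+1)%N by have := ltn_ord i; lia.
    rewrite exprS. ring.
  rewrite -mulr_sumr -opprB mulNr -subrXX /q /= exprS. ring.
- have hm' : (m < N.+1)%N by lia.
  move: (IH hm') => h. rewrite (bigD1 (Ordinal hm)) //= in h. rewrite (bigD1 (Ordinal hm)) //=.
  rewrite dist_id // expr0 mulr1. rewrite dist_pred //= in h.
  have -> : \sum_(i < N.+1 | i != Ordinal hm) q i * D ^+ dist N.+1 m.+1 i
          = D * \sum_(i < N.+1 | i != Ordinal hm) q i * D ^+ dist N.+1 m i.
    rewrite mulr_sumr; apply: eq_bigr => i hi. rewrite dist_succ //.
      by rewrite exprS; ring.
  have -> : \sum_(i < N.+1 | i != Ordinal hm) q i * D ^+ dist N.+1 m i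
     = (1 - D ^+ N.+1) * D' ^+ m - q m.+1 * D ^+ N by rewrite -h; ring.
  rewrite /q /=. rewrite !exprS. ring.
Qed.

Lemma geo_gt0 (R : realType) n (x : R) : (0 < n)%N -> 0 < x -> 0 < \sum_(l < n) x ^+ l.
Proof.
case: n => // n _ hx. rewrite big_ord_recl expr0.
have : 0 <= \sum_(i < n) x ^+ (bump 0 i) by apply: sumr_ge0 => i _; apply: exprn_ge0; apply: ltW.
lra.
Qed.

Lemma conv (R : realType) n (D D' : R) : (0 < n)%N -> 0 < D -> D < D' -> D' <= 1 ->
  exists p : nat -> R, (forall s, (s < n)%N -> 0 < p s) /\ \sum_(s < n) p s = 1 /\
  forall m, (m < n)%N ->
    D' ^+ m / \sum_(l < n) D' ^+ l = \sum_(s < n) p s * (D ^+ dist n m s / \sum_(l < n) D ^+ l).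
Proof.
case: n => // N _ hD hDD' hD'.
pose q := fun s : nat => if s == 0%N then 1 - D * D' ^+ N else D' ^+ s.-1 * (D' - D).
have hD'0 : 0 < D' by lra.
have SD'0 := geo_gt0 _ _ _ (ltn0Sn N) hD'0.
have SD0 := geo_gt0 _ _ _ (ltn0Sn N) hD.
have hD1 : D < 1 by lra.
pose k := ((1 - D) * \sum_(l < N.+1) D' ^+ l)^-1.
have hk : 0 < k by rewrite invr_gt0 mulr_gt0 // subr_gt0.
exists (fun s => k * q s). split; [|split].
- move=> s hs. apply: mulr_gt0 => //. rewrite /q. case: eqP => _.
    have : D' ^+ N <= 1 by apply: exprn_ile1; lra.
    move=> h. have : D * D' ^+ N <= D * 1 by apply: ler_wpM2l => //; lra. lra.
  apply: mulr_gt0; [exact: exprn_gt0 | lra].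
- rewrite -mulr_sumr.
  have -> : \sum_(s < N.+1) q s = (1 - D) * \sum_(l < N.+1) D' ^+ l.
    rewrite big_ord_recl /q /=.
    have -> : \sum_(i < N) (if bump 0 i == 0%N then 1 - D * D' ^+ N else D' ^+ (bump 0 i).-1 * (D' - D))
        = \sum_(i < N) D' ^+ i.+1 - D * \sum_(i < N) D' ^+ i.
      rewrite mulr_sumr -sumrB. apply: eq_bigr => i _. rewrite /bump /= exprS. ring.
    have e1 : \sum_(l < N.+1) D' ^+ l = 1 + \sum_(i < N) D' ^+ i.+1 by rewrite big_ord_recl expr0.
    have e2 : \sum_(l < N.+1) D' ^+ l = \sum_(i < N) D' ^+ i + D' ^+ N by rewrite big_ord_recr.
    rewrite e2. rewrite e2 in e1.
    have eY : \sum_(i < N) D' ^+ i.+1 = \sum_(i < N) D' ^+ i + D' ^+ N - 1 by rewrite e1; ring.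
    rewrite eY. ring.
  by rewrite mulVf // mulf_neq0 // gt_eqF // subr_gt0.
- move=> m hm.
  have -> : \sum_(s < N.+1) k * q s * (D ^+ dist N.+1 m s / \sum_(l < N.+1) D ^+ l)
     = (k / \sum_(l < N.+1) D ^+ l) * \sum_(s < N.+1) q s * D ^+ dist N.+1 m s.
    rewrite [RHS]mulr_sumr. apply: eq_bigr => s _. ring.
  rewrite conv_core //.
  have e : 1 - D ^+ N.+1 = (1 - D) * \sum_(l < N.+1) D ^+ l.
    by rewrite -[LHS]opprB subrX1 -mulNr opprB.
  rewrite e /k. field.
  rewrite !gt_eqF // ?subr_gt0 //.
Qed.

Lemma marg1 (R : realType) (I J : finType) (q : I -> J -> R) :
  (forall i, \sum_r q i r = 1) -> \sum_(f : {ffun I -> J}) \prod_i q i (f i) = 1.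
Proof.
move=> h. rewrite -(bigA_distr_bigA (fun (i : I) r => q i r)) /=.
by rewrite big1 // => i _; rewrite h.
Qed.

Lemma marg (R : realType) (I J : finType) (q : I -> J -> R) (F : J -> R) (j0 : I) :
  (forall i, \sum_r q i r = 1) ->
  \sum_(f : {ffun I -> J}) (\prod_i q i (f i)) * F (f j0) = \sum_r q j0 r * F r.
Proof.
move=> h.
have E := @bigA_distr_bigA R 0 1 *%R +%R I J (fun (i : I) r => if i == j0 then q i r * F r else q i r).
rewrite (bigD1 j0) //= eqxx in E.
have h2 : \prod_(i | i != j0) \sum_j (if i == j0 then q i j * F j else q i j) = 1.
  by apply: big1 => i hi; rewrite (negbTE hi) h.
rewrite h2 in E.
rewrite mulr1 in E. rewrite E. apply: eq_bigr => f _.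
rewrite [in RHS](bigD1 j0) //= eqxx [in LHS](bigD1 j0) //=.
have -> : \prod_(i | i != j0) (if i == j0 then q i (f i) * F (f i) else q i (f i)) = \prod_(i | i != j0) q i (f i).
  by apply: eq_bigr => i hi; rewrite (negbTE hi).
ring.
Qed.

Lemma bernoulli (R : realType) (h : R) m : 0 <= h -> 1 + m%:R * h <= (1 + h) ^+ m.
Proof.
move=> h0. elim: m => [|m IH]; first by rewrite expr0 mul0r addr0.
rewrite exprS -natr1.
have : 0 <= m%:R * h * h by apply: mulr_ge0 => //; apply: mulr_ge0.
have h1 : 0 <= 1 + h by lra.
have := ler_wpM2l h1 IH. nra.
Qed.

Lemma pow_small (R : realType) (D C c : R) : 0 <= D -> D < 1 -> 0 < c ->
  exists m, D ^+ m * C < c.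
Proof.
move=> hD0 hD1 hc. case: (lerP C 0) => hC.
  exists 0%N. rewrite expr0 mul1r. lra.
case: (eqVneq D 0) => [->|hD].
  exists 1%N. rewrite expr1 mul0r. exact: hc.
have hDp : 0 < D by rewrite lt_def hD hD0.
pose h := D^-1 - 1.
have hh : 0 < h by rewrite /h subr_gt0 invf_gt1.
pose x := C / (c * h).
have hx : 0 <= x by apply: divr_ge0; [lra | apply: mulr_ge0; lra].
exists (Num.Def.archi_bound x).
have hm := archi_boundP hx.
set m := Num.Def.archi_bound x in hm *.
have hb := bernoulli _ h m (ltW hh).
have e : D^-1 = 1 + h by rewrite /h; ring.
have hDm : D ^+ m * (1 + h) ^+ m = 1.
  by rewrite -e -exprMn divff ?expr1n // gt_eqF.
have hpos : 0 < (1 + h) ^+ m by apply: exprn_gt0; lra.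
have : C < c * (1 + m%:R * h).
  have : x * (c * h) = C by rewrite /x divfK // gt_eqF // mulr_gt0.
  have hch : 0 < c * h by apply: mulr_gt0.
  move=> ex. have := ltr_pM2r hch. move=> hh'. have : x * (c * h) < m%:R * (c * h) by rewrite hh'.
  nra.
move=> hC2. have : C < c * (1 + h) ^+ m.
  have := ler_wpM2l (ltW hc) hb. lra.
move=> hC3.
have -> : D ^+ m * C = (D ^+ m * (1 + h) ^+ m) * C / (1 + h) ^+ m.
  field. by rewrite gt_eqF.
rewrite hDm mul1r.
by rewrite ltr_pdivrMr.
Qed.

Section Main.
Variables (R : realType) (n : nat) (A : 'I_n -> finType) (u : 'I_n -> prof A -> R).
Variable a0 : prof A.
Hypothesis n_gt0 : (0 < n)%N.

Definition afun m (a : 'I_m -> prof A) (q : nat) : prof A :=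
  if insub q is Some k then a k else a0.
Arguments afun {m}.

Lemma afun_cyc m (a : 'I_m -> prof A) (k : 'I_m) s : a (cyc_idx k s) = afun a (s %% m)%N.
Proof.
rewrite /afun insubT; first by rewrite ltn_pmod // (ord_pos k).
by move=> h; congr a; apply: val_inj.
Qed.

Lemma afun_lt m (a : 'I_m -> prof A) q (h : (q < m)%N) : afun a q = a (Ordinal h).
Proof. by rewrite /afun insubT. Qed.
Arguments afun_lt {m a q} h.

Definition sgm (d : R) T := \sum_(r < T) d ^+ r.
Definition sD (d : R) T := \sum_(l < n) (d ^+ T) ^+ l.
Definition om (d : R) T (l : nat) := (d ^+ T) ^+ l / sD d T.
Definition beta (d : R) T (a : 'I_(n * T) -> prof A) (j : nat) (i : 'I_n) :=
  \sum_(r < T) (d ^+ r / sgm d T) * u i (afun a (j * T + r)%N).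

Lemma sgm_gt0 d T : 0 < d -> (0 < T)%N -> 0 < sgm d T.
Proof.
move=> hd hT. rewrite /sgm. case: T hT => // T _. rewrite big_ord_recl expr0.
have : 0 <= \sum_(i < T) d ^+ i.+1 by apply: sumr_ge0 => i _; apply: exprn_ge0; apply: ltW.
lra.
Qed.

Lemma sD_gt0 d T : 0 < d -> 0 < sD d T.
Proof.
move=> hd. rewrite /sD. case: n n_gt0 => // n' _. rewrite big_ord_recl expr0.
have : 0 <= \sum_(i < n') (d ^+ T) ^+ i.+1.
  by apply: sumr_ge0 => i _; apply: exprn_ge0; apply: exprn_ge0; apply: ltW.
lra.
Qed.

Lemma om_gt0 d T l : 0 < d -> 0 < om d T l.
Proof. move=> hd. rewrite /om divr_gt0 //; last exact: sD_gt0. by apply: exprn_gt0; apply: exprn_gt0. Qed.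

Lemma om_sum d T : 0 < d -> \sum_(l < n) om d T l = 1.
Proof. move=> hd. rewrite /om -mulr_suml divff //. by rewrite gt_eqF //; apply: sD_gt0. Qed.

Lemma GF d T (a : 'I_(n * T) -> prof A) (i : 'I_n) : 0 < d -> (0 < T)%N ->
  Ui u d a i = \sum_(j < n) om d T (dist n j i) * beta d T a j i.
Proof.
move=> hd hT. rewrite /Ui.
have nT : (0 < n * T)%N by rewrite muln_gt0 n_gt0.
have hiT : (i * T < n * T)%N by rewrite ltn_pmul2r.
under eq_bigr do rewrite afun_cyc.
rewrite -(@sum_dist _ (fun l => d ^+ l * u i (afun a ((i * T + l) %% (n * T))%N)) (n*T) (i*T) hiT) /=.
under eq_bigr do rewrite add_dist //.
rewrite (@sum_split _ (fun q => d ^+ dist (n * T) q (i * T) * u i (afun a q))) sum_split.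
have hS : \sum_(j < n) \sum_(r < T) d ^+ (j * T + r)%N = sD d T * sgm d T.
  rewrite /sD /sgm mulr_suml. apply: eq_bigr => j _.
  rewrite mulr_sumr; apply: eq_bigr => r _. by rewrite exprD (mulnC j) exprM.
rewrite hS mulr_suml. apply: eq_bigr => j _.
rewrite /om /beta [in RHS]mulr_sumr [in LHS]mulr_suml. apply: eq_bigr => r _.
have hr : (r < T)%N := ltn_ord r.
have -> : dist (n * T) (j * T + r) (i * T) = (dist n j i * T + r)%N.
  rewrite /dist. have -> : (j * T + r + n * T - i * T = (j + n - i) * T + r)%N.
    have : (i <= n)%N by apply: ltnW. nia.
  by rewrite modMD.
rewrite exprD (mulnC _ T) exprM. field. apply/andP; split; rewrite gt_eqF //. exact: sgm_gt0. exact: sD_gt0.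
Qed.

Definition blk T (c : nat -> prof A) : 'I_(n * T) -> prof A := fun q => c (q %/ T)%N.

Lemma sgm_sum d T : 0 < d -> (0 < T)%N -> \sum_(r < T) d ^+ r / sgm d T = 1.
Proof. move=> hd hT. rewrite -mulr_suml divff // gt_eqF //. exact: sgm_gt0. Qed.

Lemma beta_blk d T c (j : nat) i : 0 < d -> (0 < T)%N -> (j < n)%N ->
  beta d T (blk T c) j i = u i (c j).
Proof.
move=> hd hT hj. rewrite /beta.
have -> : \sum_(r < T) d ^+ r / sgm d T * u i (afun (blk T c) (j * T + r)%N)
        = \sum_(r < T) d ^+ r / sgm d T * u i (c j).
  apply: eq_bigr => r _. have hr : (j * T + r < n * T)%N.
    have := ltn_ord r. have : (j.+1 <= n)%N by []. move=> h1 h2. have := leq_mul h1 (leqnn T). nia.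
  rewrite (afun_lt hr) /blk /=. by rewrite divnMDl // divn_small // addn0.
by rewrite -mulr_suml sgm_sum // mul1r.
Qed.

Lemma U_blk d T c i : 0 < d -> (0 < T)%N ->
  Ui u d (blk T c) i = \sum_(j < n) om d T (dist n j i) * u i (c j).
Proof. move=> hd hT. rewrite GF //. apply: eq_bigr => j _. by rewrite beta_blk. Qed.

Definition G d T (mu : 'I_n -> R) (j : nat) (b : prof A) :=
  \sum_(i < n) om d T (dist n j i) * mu i * u i b.
Definition am d T mu j := [arg max_(b > a0) G d T mu j b]%O.
Lemma am_max d T mu j b : G d T mu j b <= G d T mu j (am d T mu j).
Proof. rewrite /am. by case: (arg_maxP (G d T mu j) (erefl true : predT a0)) => x _ /(_ b erefl). Qed.
Definition Psi d T mu := \sum_(j < n) G d T mu j (am d T mu j).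

Lemma dot_GF d T (a : 'I_(n * T) -> prof A) mu : 0 < d -> (0 < T)%N ->
  \sum_i mu i * Ui u d a i =
  \sum_(j < n) \sum_(r < T) d ^+ r / sgm d T * G d T mu j (afun a (j * T + r)%N).
Proof.
move=> hd hT. under eq_bigr do rewrite GF // mulr_sumr.
rewrite exchange_big /=. apply: eq_bigr => j _.
rewrite /G. under [RHS]eq_bigr do rewrite mulr_sumr.
rewrite [RHS]exchange_big /=. apply: eq_bigr => i _.
rewrite /beta !mulr_sumr. apply: eq_bigr => r _. ring.
Qed.

Lemma gen_bound d T (a : 'I_(n * T) -> prof A) mu : 0 < d -> (0 < T)%N ->
  \sum_i mu i * Ui u d a i <= Psi d T mu.
Proof.
move=> hd hT. rewrite dot_GF // /Psi. apply: ler_sum => j _.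
have -> : G d T mu j (am d T mu j) = \sum_(r < T) d ^+ r / sgm d T * G d T mu j (am d T mu j).
  by rewrite -mulr_suml sgm_sum // mul1r.
apply: ler_sum => r _. apply: ler_wpM2l; last exact: am_max.
apply: divr_ge0; first by apply: exprn_ge0; apply: ltW.
by apply: ltW; apply: sgm_gt0.
Qed.

Lemma F_bound d T mu x : 0 < d -> (0 < T)%N -> F u d T x -> \sum_i mu i * x i <= Psi d T mu.
Proof.
move=> hd hT. apply: co_bound => p [a _ <-]. exact: gen_bound.
Qed.

Lemma F_achieve d T mu : 0 < d -> (0 < T)%N ->
  exists x, F u d T x /\ \sum_i mu i * x i = Psi d T mu.
Proof.
move=> hd hT. exists (Ui u d (blk T (am d T mu))). split.
  by apply: co_sub; exists (blk T (am d T mu)).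
have := dot_GF d T (blk T (am d T mu)) mu hd hT. move=> ->. rewrite /Psi. apply: eq_bigr => j _.
have -> : \sum_(r < T) d ^+ r / sgm d T * G d T mu j (afun (blk T (am d T mu)) (j * T + r))
  = \sum_(r < T) d ^+ r / sgm d T * G d T mu j (am d T mu j).
  apply: eq_bigr => r _. have hr : (j * T + r < n * T)%N.
    have := ltn_ord r. have : (j.+1 <= n)%N by []. move=> h1 h2. have := leq_mul h1 (leqnn T). nia.
  rewrite (afun_lt hr) /blk /=. by rewrite divnMDl // divn_small // addn0.
by rewrite -mulr_suml sgm_sum // mul1r.
Qed.

Lemma exists_min (f : prof A -> R) : exists a, forall b, f a <= f b.
Proof.
exists [arg min_(b < a0) f b]%O.
by case: (arg_minP f (erefl true : predT a0)) => x _ h b; apply: h.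
Qed.
Lemma exists_max (f : prof A -> R) : exists a, forall b, f b <= f a.
Proof.
exists [arg max_(b > a0) f b]%O.
by case: (arg_maxP f (erefl true : predT a0)) => x _ h b; apply: h.
Qed.

Lemma Fstar_co : co (Fstar u) `<=` Fstar u.
Proof.
move=> x [m [w [p [w0 [w1 [pS ->]]]]]] i. split.
- have [amin hmin] := exists_min (u i). exists amin.
  have -> : u i amin = \sum_(k < m) w k * u i amin by rewrite -mulr_suml w1 mul1r.
  apply: ler_sum => k _; apply: ler_wpM2l => //.
  have [[b hb] _] := pS k i. exact: le_trans (hmin b) hb.
- have [amax hmax] := exists_max (u i). exists amax.
  have -> : u i amax = \sum_(k < m) w k * u i amax by rewrite -mulr_suml w1 mul1r.
  apply: ler_sum => k _; apply: ler_wpM2l => //.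
  have [_ [b hb]] := pS k i. exact: le_trans hb (hmax b).
Qed.

Lemma Ui_Fstar d T (a : 'I_(n * T) -> prof A) : 0 < d -> (0 < T)%N -> Fstar u (Ui u d a).
Proof.
move=> hd hT i. have hS : 0 < \sum_(k < n * T) d ^+ k.
  have : 0 < sD d T * sgm d T by apply: mulr_gt0; [apply: sD_gt0 | apply: sgm_gt0].
  congr (0 < _). rewrite (@sum_split _ (fun k => d ^+ k)) /sD /sgm mulr_suml. apply: eq_bigr => j _.
  rewrite mulr_sumr; apply: eq_bigr => r _. by rewrite exprD (mulnC j) exprM.
rewrite /Ui. split.
- have [amin hmin] := exists_min (u i). exists amin.
  rewrite ler_pdivlMr //. rewrite mulr_sumr. apply: ler_sum => k _.
  rewrite mulrC. apply: ler_wpM2l; [by apply: exprn_ge0; apply: ltW | exact: hmin].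
- have [amax hmax] := exists_max (u i). exists amax.
  rewrite ler_pdivrMr //. rewrite mulr_sumr. apply: ler_sum => k _.
  rewrite [leRHS]mulrC. apply: ler_wpM2l; [by apply: exprn_ge0; apply: ltW | exact: hmax].
Qed.

Lemma F_Fstar d T : 0 < d -> (0 < T)%N -> F u d T `<=` Fstar u.
Proof.
move=> hd hT x hx. apply: Fstar_co. apply: co_mono hx => p [a _ <-]. exact: Ui_Fstar.
Qed.

Lemma V_Fstar : V u `<=` Fstar u.
Proof.
move=> x hx. apply: Fstar_co. apply: co_mono hx => p [a _ <-] i.
by split; exists a.
Qed.

Lemma sumd_gt0 (d : R) T : 0 < d -> (0 < T)%N -> 0 < \sum_(k < n * T) d ^+ k.
Proof.
move=> hd hT.
have : 0 < sD d T * sgm d T by apply: mulr_gt0; [apply: sD_gt0 | apply: sgm_gt0].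
congr (0 < _). rewrite (@sum_split _ (fun k => d ^+ k)) /sD /sgm mulr_suml. apply: eq_bigr => j _.
rewrite mulr_sumr; apply: eq_bigr => r _. by rewrite exprD (mulnC j) exprM.
Qed.

Lemma V_F d T : 0 < d -> (0 < T)%N -> V u `<=` F u d T.
Proof.
move=> hd hT. apply: co_mono => p [a _ <-].
exists (fun _ => a) => //. apply: funext => i.
have h0 := sumd_gt0 d T hd hT.
rewrite /Ui -mulr_suml mulrAC divff ?mul1r //. by rewrite gt_eqF.
Qed.

Definition i0 : 'I_n := Ordinal n_gt0.

Lemma G_conv d T d' T' (p : nat -> R) mu (j : nat) b :
  (forall m, (m < n)%N -> om d' T' m = \sum_(s < n) p s * om d T (dist n m s)) -> (j < n)%N ->
  G d' T' mu j b = \sum_(s < n) p s * G d T mu (dist n j s) b.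
Proof.
move=> hp hj. rewrite /G. under eq_bigr => i _ do rewrite hp ?dist_lt // !mulr_suml.
rewrite exchange_big /=. apply: eq_bigr => s _. rewrite mulr_sumr. apply: eq_bigr => i _.
rewrite dist_swap //. ring.
Qed.

Definition Wt d' T' (rho : {ffun 'I_n -> 'I_T'}) := \prod_(j : 'I_n) (d' ^+ rho j / sgm d' T').
Definition wt d' T' (p : nat -> R) (x : {ffun 'I_n -> 'I_T'} * 'I_n) := Wt d' T' x.1 * p x.2.
Definition cc T' (a : 'I_(n * T') -> prof A) (x : {ffun 'I_n -> 'I_T'} * 'I_n) : nat -> prof A :=
  fun k => afun a (((k + x.2) %% n) * T' + x.1 (insubd i0 ((k + x.2) %% n)))%N.

Lemma beta_marg d' T' (a : 'I_(n * T') -> prof A) (j : nat) i : 0 < d' -> (0 < T')%N ->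
  beta d' T' a j i = \sum_(rho : {ffun 'I_n -> 'I_T'}) Wt d' T' rho * u i (afun a (j * T' + rho (insubd i0 j))%N).
Proof.
move=> hd hT. rewrite /beta /Wt.
rewrite (@marg R 'I_n 'I_T' (fun _ r => d' ^+ r / sgm d' T') (fun r => u i (afun a (j * T' + r)%N)) (insubd i0 j)) //.
move=> _; exact: sgm_sum.
Qed.

Lemma incl d T d' T' (p : nat -> R) (a : 'I_(n * T') -> prof A) i :
  0 < d -> (0 < T)%N -> 0 < d' -> (0 < T')%N ->
  (forall m, (m < n)%N -> om d' T' m = \sum_(s < n) p s * om d T (dist n m s)) ->
  Ui u d' a i = \sum_(x : {ffun 'I_n -> 'I_T'} * 'I_n) wt d' T' p x * Ui u d (blk T (cc T' a x)) i.
Proof.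
move=> hd hT hd' hT' hp.
transitivity (\sum_(s < n) p s * \sum_(k < n) om d T (dist n k i) * beta d' T' a ((k + s) %% n)%N i).
- rewrite GF //.
  under eq_bigr => j _ do rewrite hp ?dist_lt // mulr_suml.
  rewrite exchange_big /=. apply: eq_bigr => s _. rewrite mulr_sumr.
  under eq_bigr => j _ do rewrite -dist_swap // mulrA.
  pose Fj := fun j : nat => p s * (om d T (dist n (dist n j s) i) * beta d' T' a j i).
  transitivity (\sum_(j < n) Fj j); first by apply: eq_bigr => j _; rewrite /Fj /om; ring.
  rewrite -(@sum_shift _ Fj n s (ltn_ord s)) /Fj.
  apply: eq_bigr => k _. by rewrite addnC dist_add.
- rewrite [RHS](eq_bigr (fun x => wt d' T' p (x.1, x.2) * Ui u d (blk T (cc T' a (x.1, x.2))) i)); last by move=> [rho s'].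
  rewrite -(pair_bigA _ (fun rho s' => wt d' T' p (rho, s') * Ui u d (blk T (cc T' a (rho, s'))) i)) /=.
  rewrite [RHS]exchange_big /=. apply: eq_bigr => s _.
  rewrite /wt /=. under [RHS]eq_bigr => rho _ do rewrite U_blk // mulr_sumr.
  rewrite [RHS]exchange_big /= mulr_sumr. apply: eq_bigr => k _.
  rewrite beta_marg // !mulr_sumr. apply: eq_bigr => rho _. rewrite /cc /=. ring.
Qed.

Lemma wt_sum d' T' (p : nat -> R) : 0 < d' -> (0 < T')%N -> \sum_(s < n) p s = 1 ->
  \sum_(x : {ffun 'I_n -> 'I_T'} * 'I_n) wt d' T' p x = 1.
Proof.
move=> hd hT hp.
rewrite (eq_bigr (fun x => (fun (rho : {ffun 'I_n -> 'I_T'}) (s : 'I_n) => Wt d' T' rho * p s) x.1 x.2)); last by move=> [rho s'].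
rewrite -(pair_bigA _ (fun (rho : {ffun 'I_n -> 'I_T'}) (s : 'I_n) => Wt d' T' rho * p s)) /=.
under eq_bigr do rewrite -mulr_sumr hp mulr1.
rewrite /Wt. apply: (@marg1 R 'I_n 'I_T' (fun _ r => d' ^+ r / sgm d' T')) => _. exact: sgm_sum.
Qed.

Lemma wt_ge0 d' T' (p : nat -> R) x : 0 < d' -> (0 < T')%N -> (forall s, (s < n)%N -> 0 <= p s) ->
  0 <= wt d' T' p x.
Proof.
move=> hd hT hp. rewrite /wt /Wt. apply: mulr_ge0; last exact: hp.
apply: prodr_ge0 => j _. apply: divr_ge0; first by apply: exprn_ge0; apply: ltW.
by apply: ltW; apply: sgm_gt0.
Qed.

Lemma F_incl d T d' T' (p : nat -> R) :
  0 < d -> (0 < T)%N -> 0 < d' -> (0 < T')%N ->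
  (forall s, (s < n)%N -> 0 <= p s) -> \sum_(s < n) p s = 1 ->
  (forall m, (m < n)%N -> om d' T' m = \sum_(s < n) p s * om d T (dist n m s)) ->
  F u d' T' `<=` F u d T.
Proof.
move=> hd hT hd' hT' hp0 hp1 hp x [m [w [q [w0 [w1 [qS ->]]]]]].
have [af haf] : exists af : 'I_m -> 'I_(n * T') -> prof A, forall k, Ui u d' (af k) = q k.
  apply: (@fin_all_exists _ (fun _ => 'I_(n * T') -> prof A) (fun k a => Ui u d' a = q k)).
  by move=> k; have [a _ <-] := qS k; exists a.
have -> : (fun i => \sum_(k < m) w k * q k i) =
  (fun i => \sum_(y : 'I_m * ({ffun 'I_n -> 'I_T'} * 'I_n)) (w y.1 * wt d' T' p y.2) *
       Ui u d (blk T (cc T' (af y.1) y.2)) i).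
  apply: funext => i.
  rewrite (eq_bigr (fun y => (fun k z => (w k * wt d' T' p z) * Ui u d (blk T (cc T' (af k) z)) i) y.1 y.2)); last by move=> [].
  rewrite -(pair_bigA _ (fun k z => (w k * wt d' T' p z) * Ui u d (blk T (cc T' (af k) z)) i)) /=.
  apply: eq_bigr => k _. rewrite -haf (incl d T d' T' p (af k) i hd hT hd' hT' hp) mulr_sumr.
  apply: eq_bigr => z _; ring.
apply: co_fin.
- move=> y. apply: mulr_ge0 => //. exact: wt_ge0.
- rewrite (eq_bigr (fun y => (fun k z => w k * wt d' T' p z) y.1 y.2)); last by move=> [].
  rewrite -(pair_bigA _ (fun k z => w k * wt d' T' p z)) /=.
  under eq_bigr do rewrite -mulr_sumr wt_sum // mulr1. exact: w1.
- move=> y. by exists (blk T (cc T' (af y.1) y.2)).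
Qed.

Lemma dist00 k : (k < n)%N -> dist n 0 (dist n 0 k) = k.
Proof.
move=> hk. case: k hk => [|k] hk; first by rewrite !dist_id.
have h1 : dist n 0 k.+1 = (n - k.+1)%N by apply: dist_0l; lia.
rewrite h1. have h2 : dist n 0 (n - k.+1) = (n - (n - k.+1))%N by apply: dist_0l; lia.
rewrite h2. lia.
Qed.

Lemma HH d T d' T' (p : nat -> R) :
  0 < d -> (0 < T)%N -> 0 < d' -> (0 < T')%N ->
  (forall s, (s < n)%N -> 0 < p s) -> \sum_(s < n) p s = 1 ->
  (forall m, (m < n)%N -> om d' T' m = \sum_(s < n) p s * om d T (dist n m s)) ->
  F u d T `<=` F u d' T' ->
  forall mu, exists a, forall k, (k < n)%N -> forall b, G d T mu k b <= G d T mu k a.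
Proof.
move=> hd hT hd' hT' hp0 hp1 hp sub mu.
have [x [Fx hx]] := F_achieve d T mu hd hT.
have hle : Psi d T mu <= Psi d' T' mu by rewrite -hx; apply: F_bound (sub _ Fx).
pose Y (s j : nat) := G d T mu (dist n j s) (am d T mu (dist n j s)) - G d T mu (dist n j s) (am d' T' mu j).
have Ynn : forall s j, 0 <= Y s j by move=> s j; rewrite /Y subr_ge0 am_max.
have e1 : Psi d T mu = \sum_(s < n) p s * \sum_(j < n) G d T mu (dist n j s) (am d T mu (dist n j s)).
  under eq_bigr => s _ do rewrite (@sum_dist _ (fun k => G d T mu k (am d T mu k)) n s (ltn_ord s)).
  by rewrite -mulr_suml hp1 mul1r.
have e2 : Psi d' T' mu = \sum_(s < n) p s * \sum_(j < n) G d T mu (dist n j s) (am d' T' mu j).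
  rewrite /Psi. under eq_bigr => j _ do rewrite (G_conv d T d' T' p mu j _ hp (ltn_ord j)).
  rewrite exchange_big /=. apply: eq_bigr => s _. by rewrite mulr_sumr.
have hsum : \sum_(s < n) p s * \sum_(j < n) Y s j == 0.
  rewrite eq_le; apply/andP; split.
    have -> : \sum_(s < n) p s * \sum_(j < n) Y s j = Psi d T mu - Psi d' T' mu.
      rewrite e1 e2 -sumrB. apply: eq_bigr => s _. rewrite -mulrBr -sumrB //.
    by rewrite subr_le0.
  apply: sumr_ge0 => s _. apply: mulr_ge0; first by apply: ltW; apply: hp0.
  by apply: sumr_ge0.
have hY : forall s j, (s < n)%N -> (j < n)%N -> Y s j = 0.
  move=> s j hs hj.
  have h1 := (psumr_eq0P (fun (s : 'I_n) _ => mulr_ge0 (ltW (hp0 _ (ltn_ord s))) (sumr_ge0 _ (fun (j : 'I_n) _ => Ynn s j))) (eqP hsum)) (Ordinal hs) erefl.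
  have h2 : \sum_(j < n) Y s j = 0.
    move: h1 => /eqP; rewrite mulf_eq0 => /orP [/eqP h|/eqP //].
    by have := hp0 _ hs; rewrite h ltxx.
  have h3 := (psumr_eq0P (fun (j : 'I_n) _ => Ynn s j) h2) (Ordinal hj) erefl.
  exact: h3.
exists (am d' T' mu 0%N) => k hk b.
have := hY (dist n 0 k) 0%N (dist_lt _ _ _ n_gt0) n_gt0. rewrite /Y dist00 // => /eqP.
rewrite subr_eq0 => /eqP <-. exact: am_max.
Qed.

Definition Lf (mu : 'I_n -> R) (b : prof A) := \sum_i mu i * u i b.
Definition UM mu a := forall b, ~ (forall i, u i b = u i a) -> Lf mu b < Lf mu a.

Lemma sumG d T mu b : 0 < d -> \sum_(k < n) G d T mu k b = Lf mu b.
Proof.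
move=> hd. rewrite /G /Lf exchange_big /=. apply: eq_bigr => i _.
transitivity (\sum_(k < n) om d T (dist n k i) * (mu i * u i b)).
  by apply: eq_bigr => k _; rewrite mulrA.
by rewrite -mulr_suml (@sum_dist _ (om d T) n i (ltn_ord i)) om_sum // mul1r.
Qed.

Lemma sq_pos (x y : 'I_n -> R) : ~ (forall i, x i = y i) -> 0 < \sum_i (x i - y i) * (x i - y i).
Proof.
move=> h. have [i hi] : exists i, x i <> y i by apply/existsNP.
rewrite (bigD1 i) //=.
have : 0 <= \sum_(j | j != i) (x j - y j) * (x j - y j).
  by apply: sumr_ge0 => j _; rewrite -expr2 sqr_ge0.
have : 0 < (x i - y i) * (x i - y i).
  rewrite -expr2 exprn_even_gt0 //. rewrite subr_eq0. by apply/eqP.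
lra.
Qed.

Lemma UM_step d T mu a k : 0 < d ->
  (forall mu, exists a, forall k, (k < n)%N -> forall b, G d T mu k b <= G d T mu k a) ->
  UM mu a -> (k < n)%N -> UM (fun i => om d T (dist n k i) * mu i) a.
Proof.
move=> hd HHp hU hk b hb. rewrite ltNge; apply/negP => hge.
pose r := fun i : 'I_n => om d T (dist n k i).
have r0 : forall i, 0 < r i by move=> i; apply: om_gt0.
pose dv := fun i => (u i b - u i a) / r i.
pose g := fun b' => if pselect (forall i, u i b' = u i a) is left _ then 1 else Lf mu a - Lf mu b'.
have g0 : forall b', 0 < g b'.
  move=> b'. rewrite /g. case: pselect => [_|hne]; first exact: ltr01.
  by rewrite subr_gt0; apply: hU.
have [bm hbm] := exists_min g.
pose h := fun b' => Lf dv b' - Lf dv a.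
pose K := 1 + \sum_(b' : prof A) `|h b'|.
have Sh0 : 0 <= \sum_(b' : prof A) `|h b'| by apply: sumr_ge0 => b' _.
have K0 : 0 < K by rewrite /K; lra.
pose eps := g bm / K.
have eps0 : 0 < eps by apply: divr_gt0.
pose mu' := fun i => mu i + eps * dv i.
have Lf' : forall b', Lf mu' b' = Lf mu b' + eps * Lf dv b'.
  move=> b'. rewrite /Lf mulr_sumr -big_split /=. apply: eq_bigr => i _. rewrite /mu'. ring.
have hU' : UM mu' a.
  move=> b' hb'. rewrite !Lf'.
  have hg : g b' = Lf mu a - Lf mu b' by rewrite /g; case: pselect.
  have hhb : `|h b'| <= \sum_(b'' : prof A) `|h b''|.
    rewrite (bigD1 b') //=. have : 0 <= \sum_(b'' | b'' != b') `|h b''| by apply: sumr_ge0.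
    lra.
  have h1 : eps * h b' <= eps * `|h b'| by apply: ler_wpM2l; [apply: ltW | apply: ler_norm].
  have h2 : eps * `|h b'| <= eps * (K - 1) by apply: ler_wpM2l; [apply: ltW | rewrite /K; lra].
  have h3 : eps * K = g bm by rewrite /eps divfK // gt_eqF.
  have h4 := hbm b'.
  rewrite /h in h1. nra.
have [a' ha'] := HHp mu'.
have eqa : forall i, u i a' = u i a.
  case: (pselect (forall i, u i a' = u i a)) => // hne.
  have := hU' a' hne. rewrite -!(sumG d T mu') //.
  have : \sum_(k0 < n) G d T mu' k0 a <= \sum_(k0 < n) G d T mu' k0 a'.
    by apply: ler_sum => k0 _; apply: ha'.
  lra.
have := ha' k hk b.
have -> : G d T mu' k a' = G d T mu' k a by rewrite /G; apply: eq_bigr => i _; rewrite eqa.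
have eG : forall b', G d T mu' k b' = G d T mu k b' + eps * \sum_i (u i b - u i a) * u i b'.
  move=> b'. rewrite /G mulr_sumr -big_split /=. apply: eq_bigr => i _.
  rewrite /mu' /dv /r. have := r0 i. rewrite /r => ri. field. by rewrite gt_eqF.
rewrite !eG.
have hsq := sq_pos (fun i => u i b) (fun i => u i a) hb.
have e2 : \sum_i (u i b - u i a) * u i b - \sum_i (u i b - u i a) * u i a =
          \sum_i (u i b - u i a) * (u i b - u i a).
  rewrite -sumrB. apply: eq_bigr => i _. ring.
have hge' : G d T mu k a <= G d T mu k b by [].
have : 0 < eps * \sum_i (u i b - u i a) * (u i b - u i a) by apply: mulr_gt0.
rewrite -e2. nra.
Qed.

Lemma powle (x y : R) m : 0 <= x -> x <= y -> x ^+ m <= y ^+ m.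
Proof.
move=> h0 h1. elim: m => [|m IH]; first by rewrite !expr0.
rewrite !exprS. apply: ler_pM => //. exact: exprn_ge0.
Qed.

Lemma dist_eq0 k i : (k < n)%N -> (i < n)%N -> dist n k i = 0%N -> i = k.
Proof. move=> hk hi. rewrite /dist mod2; last lia. case: ifP; lia. Qed.

Lemma UM_iter d T mu a k : 0 < d ->
  (forall mu, exists a, forall k, (k < n)%N -> forall b, G d T mu k b <= G d T mu k a) ->
  UM mu a -> (k < n)%N -> forall m, UM (fun i : 'I_n => om d T (dist n k i) ^+ m * mu i) a.
Proof.
move=> hd HHp hU hk. elim=> [|m IH].
  have -> : (fun i : 'I_n => om d T (dist n k i) ^+ 0 * mu i) = mu by apply: funext => i; rewrite expr0 mul1r.
  exact: hU.
have := UM_step d T _ a k hd HHp IH hk.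
have -> : (fun i : 'I_n => om d T (dist n k i) * (om d T (dist n k i) ^+ m * mu i)) =
          (fun i : 'I_n => om d T (dist n k i) ^+ m.+1 * mu i).
  by apply: funext => i; rewrite exprS mulrA.
done.
Qed.

Lemma UM_limit d T mu a (k : 'I_n) : 0 < d -> d ^+ T < 1 ->
  (forall m, UM (fun i : 'I_n => om d T (dist n k i) ^+ m * mu i) a) ->
  forall b, mu k * u k b <= mu k * u k a.
Proof.
move=> hd hD hU b. rewrite leNgt; apply/negP => hlt.
set D := d ^+ T in hD.
have D0 : 0 <= D by apply: exprn_ge0; apply: ltW.
pose c := mu k * u k b - mu k * u k a.
have c0 : 0 < c by rewrite /c subr_gt0.
have hb : ~ (forall i, u i b = u i a).
  by move=> h; move: c0; rewrite /c h subrr ltxx.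
pose e := fun i => mu i * (u i b - u i a).
pose C := \sum_i `|e i|.
have [m hm] := pow_small R D C c D0 hD c0.
have := hU m b hb. rewrite /Lf -subr_lt0 -sumrB.
have om0 : 0 < om d T 0 by apply: om_gt0.
have omle : forall i, i != k -> om d T (dist n k i) <= om d T 0 * D.
  move=> i hi. rewrite /om -/D expr0 mul1r [leRHS]mulrC ler_pM2r; last by rewrite invr_gt0 sD_gt0.
  have hne : dist n k i <> 0%N.
    move=> h; move: hi; by rewrite (val_inj (dist_eq0 k i (ltn_ord k) (ltn_ord i) h)) eqxx.
  case E : (dist n k i) hne => [//|l] _. rewrite exprS. apply: ler_piMr => //.
  apply: exprn_ile1 => //. exact: ltW.
have key : forall i, i != k ->
  - (om d T 0 ^+ m * D ^+ m * `|e i|) <= om d T (dist n k i) ^+ m * e i.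
  move=> i hi. have h1 : 0 <= om d T (dist n k i) ^+ m by apply: exprn_ge0; apply: ltW; apply: om_gt0.
  have h2 : om d T (dist n k i) ^+ m <= om d T 0 ^+ m * D ^+ m.
    rewrite -exprMn. apply: powle; [by apply: ltW; apply: om_gt0 | exact: omle].
  have h3 : - (om d T (dist n k i) ^+ m * `|e i|) <= om d T (dist n k i) ^+ m * e i.
    rewrite -mulrN. apply: ler_wpM2l => //. exact: lerNnormlW (lexx _).
  have h4 : om d T (dist n k i) ^+ m * `|e i| <= om d T 0 ^+ m * D ^+ m * `|e i|.
    by apply: ler_wpM2r.
  lra.
rewrite (bigD1 k) //= dist_id //.
have hs : \sum_(i | i != k) - (om d T 0 ^+ m * D ^+ m * `|e i|) <=
          \sum_(i | i != k) (om d T (dist n k i) ^+ m * mu i * u i b - om d T (dist n k i) ^+ m * mu i * u i a).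
  apply: ler_sum => i hi. have := key i hi. rewrite /e. move=> h. apply: le_trans h _. rewrite le_eqVlt; apply/orP; left; apply/eqP; ring.
have hC : \sum_(i | i != k) `|e i| <= C.
  rewrite /C [leRHS](bigD1 k) //=. have : 0 <= `|e k| by []. lra.
rewrite sumrN -mulr_sumr in hs.
have hp : 0 < om d T 0 ^+ m by apply: exprn_gt0.
have hDm : 0 <= D ^+ m by apply: exprn_ge0.
have h5 : om d T 0 ^+ m * D ^+ m * \sum_(i | i != k) `|e i| <= om d T 0 ^+ m * (D ^+ m * C).
  rewrite -mulrA. apply: ler_wpM2l; [exact: ltW | exact: ler_wpM2l].
have h6 : om d T 0 ^+ m * (D ^+ m * C) < om d T 0 ^+ m * c by rewrite ltr_pM2l.
have e7 : om d T 0 ^+ m * mu k * u k b - om d T 0 ^+ m * mu k * u k a = om d T 0 ^+ m * c by rewrite /c; ring.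
rewrite e7. lra.
exact: ltnW.
Qed.

Lemma generic (lam : 'I_n -> bool) :
  exists mu a, UM mu a /\ forall k, (lam k -> 0 < mu k) /\ (~~ lam k -> mu k < 0).
Proof.
pose sg (k : 'I_n) : R := if lam k then 1 else -1.
have sg0 : forall k, sg k != 0 by move=> k; rewrite /sg; case: (lam k); rewrite ?oppr_eq0 oner_eq0.
pose P (ab : prof A * prof A) : {poly R} :=
  \poly_(i < n) (sg (insubd i0 i) * (u (insubd i0 i) ab.1 - u (insubd i0 i) ab.2)).
pose dif (ab : prof A * prof A) := [exists i : 'I_n, u i ab.1 != u i ab.2].
pose Q := \prod_(ab | dif ab) P ab.
have PQ : forall ab, dif ab -> P ab != 0.
  move=> ab /existsP [i hi]. apply/eqP => h0. have := congr1 (fun p : {poly R} => p`_i) h0.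
  rewrite coef_poly ltn_ord coef0 valKd => /eqP. rewrite mulf_eq0 (negbTE (sg0 i)) /= subr_eq0.
  by rewrite (negbTE hi).
have Q0 : Q != 0 by apply/prodf_neq0.
pose rs := [seq (j.+1)%:R | j <- iota 0 (size Q)] : seq R.
have : ~~ all (root Q) rs.
  apply/negP => hall.
  have hu : uniq rs.
    have hinj : injective (fun j : nat => (j.+1)%:R : R).
      by move=> x y /eqP; rewrite eqr_nat => /eqP [].
    by rewrite (map_inj_uniq hinj) iota_uniq.
  have := max_poly_roots Q0 hall hu. by rewrite size_map size_iota ltnn.
move/allPn => [t /mapP [j _ ->] hnr].
set t' := (j.+1)%:R : R.
have t0 : 0 < t' by rewrite ltr0n.
pose mu := fun i : 'I_n => sg i * t' ^+ i.
have hP : forall ab, (P ab).[t'] = Lf mu ab.1 - Lf mu ab.2.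
  move=> ab. rewrite horner_poly /Lf -sumrB. apply: eq_bigr => i _. rewrite valKd /mu. ring.
have hne : forall ab, dif ab -> (P ab).[t'] != 0.
  move=> ab hab. move: hnr. rewrite /root horner_prod => /prodf_neq0. by apply.
have [a ha] := exists_max (Lf mu).
exists mu, a. split.
- move=> b hb. have hd : dif (b, a).
    apply/existsP. have [i hi] : exists i, u i b <> u i a by apply/existsNP.
    by exists i; apply/eqP.
  have := hne _ hd. rewrite hP /= subr_eq0 => h. by rewrite lt_def eq_sym h ha.
- move=> k. rewrite /mu /sg. case: (lam k) => /=; split=> // _.
    by rewrite mul1r exprn_gt0.
  by rewrite mulN1r oppr_lt0 exprn_gt0.
Qed.

Lemma corners d T : 0 < d -> d ^+ T < 1 ->
  (forall mu, exists a, forall k, (k < n)%N -> forall b, G d T mu k b <= G d T mu k a) ->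
  forall lam : {ffun 'I_n -> bool}, exists a, forall k b,
    (lam k -> u k b <= u k a) /\ (~~ lam k -> u k a <= u k b).
Proof.
move=> hd hD HHp lam. have [mu [a [hU hs]]] := generic lam.
exists a => k b.
have hl := UM_limit d T mu a k hd hD (UM_iter d T mu a k hd HHp hU (ltn_ord k)) b.
have [hp hn] := hs k. split=> hk.
- by move: hl; rewrite ler_pM2l //; apply: hp.
- by move: hl; rewrite ler_nM2l //; apply: hn.
Qed.

Lemma box :
  (forall lam : {ffun 'I_n -> bool}, exists a, forall k b,
    (lam k -> u k b <= u k a) /\ (~~ lam k -> u k a <= u k b)) ->
  Fstar u `<=` V u.
Proof.
move=> hc x hx.
have [ac hac] := @fin_all_exists {ffun 'I_n -> bool} (fun _ => prof A)
  (fun lam a => forall k b, (lam k -> u k b <= u k a) /\ (~~ lam k -> u k a <= u k b)) hc.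
pose M k := u k (ac [ffun=> true]).
pose m k := u k (ac [ffun=> false]).
have hM : forall (lam : {ffun 'I_n -> bool}) k, lam k -> u k (ac lam) = M k.
  move=> lam k hk. apply/eqP; rewrite eq_le; apply/andP; split.
    by have [h _] := hac [ffun=> true] k (ac lam); apply: h; rewrite ffunE.
  by have [h _] := hac lam k (ac [ffun=> true]); apply: h.
have hm : forall (lam : {ffun 'I_n -> bool}) k, ~~ lam k -> u k (ac lam) = m k.
  move=> lam k hk. apply/eqP; rewrite eq_le; apply/andP; split.
    by have [_ h] := hac lam k (ac [ffun=> false]); apply: h.
  by have [_ h] := hac [ffun=> false] k (ac lam); apply: h; rewrite ffunE.
have hxm : forall k, m k <= x k.
  move=> k. have [[a ha] _] := hx k. apply: le_trans ha.
  by have [_ h] := hac [ffun=> false] k a; apply: h; rewrite ffunE.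
have hxM : forall k, x k <= M k.
  move=> k. have [_ [b hb]] := hx k. apply: le_trans hb _.
  by have [h _] := hac [ffun=> true] k b; apply: h; rewrite ffunE.
pose t k := if M k == m k then 1 else (x k - m k) / (M k - m k).
have ht : forall k, [/\ 0 <= t k, t k <= 1 & x k = t k * M k + (1 - t k) * m k].
  move=> k. rewrite /t. case: eqP => he.
    split; [exact: ler01 | by [] |]. have := hxm k; have := hxM k. rewrite he. lra.
  have hpos : 0 < M k - m k.
    have := hxm k; have := hxM k. move=> h1 h2.
    rewrite lt_def subr_ge0 (le_trans h2 h1) andbT subr_eq0. by apply/eqP.
  split.
  - apply: divr_ge0 => //; last exact: ltW. by rewrite subr_ge0.
  - by rewrite ler_pdivrMr // mul1r lerD2r.
  - field. by rewrite gt_eqF.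
pose q k (b : bool) := if b then t k else 1 - t k.
have hq : forall k, \sum_b q k b = 1.
  by move=> k; rewrite /q big_bool /=; ring.
have -> : x = (fun i => \sum_(lam : {ffun 'I_n -> bool}) (\prod_k q k (lam k)) * u i (ac lam)).
  apply: funext => i.
  transitivity (\sum_(lam : {ffun 'I_n -> bool}) (\prod_k q k (lam k)) * (if lam i then M i else m i)).
    rewrite (@marg R 'I_n bool q (fun b => if b then M i else m i) i hq) big_bool /q /=.
    by have [_ _ ->] := ht i.
  apply: eq_bigr => lam _. congr (_ * _). case E : (lam i).
    by rewrite hM.
  by rewrite hm // E.
apply: co_fin.
- move=> lam. apply: prodr_ge0 => k _. rewrite /q. have [h0 h1 _] := ht k.
  case: (lam k) => //. lra.
- exact: marg1.
- move=> lam. by exists (ac lam).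
Qed.

End Main.

Theorem proposition1 (R : realType) (n : nat) (A : 'I_n -> finType)
  (u : 'I_n -> prof A -> R) :
  (2 <= n)%N -> (forall i, (0 < #|A i|)%N) ->
  (V u <> Fstar u ->
     forall (delta delta' : R) (T T' : nat),
       0 < delta <= 1 -> 0 < delta' <= 1 -> (0 < T)%N -> (0 < T')%N ->
       delta ^+ T < delta' ^+ T' ->
       F u delta' T' `<` F u delta T) /\
  (V u = Fstar u ->
     forall (delta : R) (T : nat), 0 < delta <= 1 -> (0 < T)%N ->
       F u delta T = V u).
Proof.
move=> hn hA.
have n_gt0 : (0 < n)%N by apply: ltnW.
pose a0 : prof A := [ffun i => enum_val (Ordinal (hA i))].
split.
- move=> hV d d' T T' /andP [hd hd1] /andP [hd' hd'1] hT hT' hlt.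
  have hD0 : 0 < d ^+ T by apply: exprn_gt0.
  have hD'1 : d' ^+ T' <= 1 by apply: exprn_ile1 => //; apply: ltW.
  have [p [hp0 [hp1 hp]]] := conv R n _ _ n_gt0 hD0 hlt hD'1.
  split.
  + apply: (F_incl R n A u a0 n_gt0 d T d' T' p) => //.
    by move=> s hs; apply: ltW; apply: hp0.
  + move=> sub. apply: hV. apply/seteqP; split; first exact: V_Fstar.
    apply: (box R n A u).
    apply: (corners R n A u a0 n_gt0 d T) => //.
      exact: lt_le_trans hlt hD'1.
    exact: (HH R n A u a0 n_gt0 d T d' T' p).
- move=> hV d T /andP [hd hd1] hT. apply/seteqP; split.
    rewrite hV. exact: (F_Fstar R n A u a0 n_gt0).
  by apply: V_F.
Qed.
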